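(* Let $X$ be a set and let $R$ be a topology expander over $X$. Then the least fixed point $\mu\tau.\,R(\tau)$ of $R$ (which exists since the topologies on $X$ form a complete lattice under inclusion and $R$ is monotone) is a Noetherian topology on $X$.
   Context: A topological space is Noetherian if every subset is compact; equivalently, every increasing sequence $(U_i)_{i\in\mathbb N}$ of open sets satisfies $\bigcup_{i\in\mathbb N}U_i=\bigcup_{i\le j}U_i$ for some $j$. A topology $\tau$ is Noetherian if $(X,\tau)$ is. A refinement function over a set $X$ is a map $R$ from topologies on $X$ to topologies on $X$ such that (i) $\tau\subseteq\tau'$ implies $R(\tau)\subseteq R(\tau')$, and (ii) $R(\tau)$ is Noetherian whenever $\tau$ is. For a topology $\tau$ on $X$ and a subset $H\subseteq X$ (typically closed), the subset restriction $\tau|_H$ is the topology on $X$ generated by the sets $U\cap H$ for $U\in\tau$. A topology expander is a refinement function $R$ such that for every Noetherian topology $\tau$ with $\tau\subseteq R(\tau)$ and every set $H$ closed in $\tau$, one has $R(\tau)|_H = R(\tau|_H)|_H$. *)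

(* Defs.v *)
From Stdlib Require Import List.

Set Implicit Arguments.

Section Topo.
Variable X : Type.

Definition set := X -> Prop.
Definition family := set -> Prop.

Definition subset (A B : set) : Prop := forall x, A x -> B x.
Definition fsubset (F G : family) : Prop := forall U, F U -> G U.
Definition feq (F G : family) : Prop := fsubset F G /\ fsubset G F.

Definition bigunion (F : family) : set := fun x => exists U, F U /\ U x.
Definition setI (A B : set) : set := fun x => A x /\ B x.
Definition setT : set := fun _ => True.

Definition is_topology (tau : family) : Prop :=
  tau setT /\
  (forall U V, tau U -> tau V -> tau (setI U V)) /\
  (forall F, fsubset F tau -> tau (bigunion F)).

Definition is_closed (tau : family) (H : set) : Prop :=
  tau (fun x => ~ H x).

Definition compact_in (tau : family) (S : set) : Prop :=
  forall F : family, fsubset F tau -> subset S (bigunion F) ->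
    exists l : list set, (forall U, In U l -> F U) /\
      subset S (fun x => exists U, In U l /\ U x).

Definition noetherian (tau : family) : Prop :=
  forall S : set, compact_in tau S.

Definition generated (B : family) : family :=
  fun V => forall sigma, is_topology sigma -> fsubset B sigma -> sigma V.

Definition restrict (tau : family) (H : set) : family :=
  generated (fun W => exists U, tau U /\ (forall x, W x <-> (U x /\ H x))).

Definition refinement (R : family -> family) : Prop :=
  (forall tau, is_topology tau -> is_topology (R tau)) /\
  (forall tau tau', is_topology tau -> is_topology tau' ->
      fsubset tau tau' -> fsubset (R tau) (R tau')) /\
  (forall tau, is_topology tau -> noetherian tau -> noetherian (R tau)).

Definition topology_expander (R : family -> family) : Prop :=
  refinement R /\
  forall tau H, is_topology tau -> noetherian tau -> fsubset tau (R tau) ->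
    is_closed tau H ->
    feq (restrict (R tau) H) (restrict (R (restrict tau H)) H).

Definition is_lfp (R : family -> family) (tau : family) : Prop :=
  is_topology tau /\ feq (R tau) tau /\
  (forall sigma, is_topology sigma -> feq (R sigma) sigma -> fsubset tau sigma).

End Topo.

(* Main.v *)
Require Import Defs.
From Stdlib Require Import List Classical ClassicalEpsilon FunctionalExtensionality PropExtensionality Lia PeanoNat.

Lemma set_ext {X} (A B : set X) : (forall x, A x <-> B x) -> A = B.
Proof. intro H; apply functional_extensionality; intro x; apply propositional_extensionality; auto. Qed.

Lemma fam_ext {X} (F G : family X) : fsubset F G -> fsubset G F -> F = G.
Proof. intros H1 H2; apply functional_extensionality; intro U; apply propositional_extensionality; split; auto. Qed.

Lemma top_ext {X} (t : family X) (A B : set X) : t A -> (forall x, A x <-> B x) -> t B.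
Proof. intros H E; rewrite <- (set_ext A B E); exact H. Qed.

Lemma gen_top {X} (B : family X) : is_topology (generated B).
Proof.
  split; [|split].
  - intros s Hs _; apply Hs.
  - intros U V HU HV s Hs HB; apply Hs; [apply HU|apply HV]; auto.
  - intros F HF s Hs HB; apply Hs; intros U HU; apply HF; auto.
Qed.

Lemma gen_incl {X} (B : family X) : fsubset B (generated B).
Proof. intros U HU s Hs HB; apply HB; auto. Qed.

Lemma gen_min {X} (B : family X) s : is_topology s -> fsubset B s -> fsubset (generated B) s.
Proof. intros Hs HB U HU; apply HU; auto. Qed.

Lemma top_setT {X} (t : family X) : is_topology t -> t (@setT X).
Proof. intros [H _]; exact H. Qed.
Lemma top_inter {X} (t : family X) U V : is_topology t -> t U -> t V -> t (setI U V).
Proof. intros [_ [H _]]; auto. Qed.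
Lemma top_union {X} (t : family X) F : is_topology t -> fsubset F t -> t (bigunion F).
Proof. intros [_ [_ H]]; auto. Qed.

Lemma top_full {X} (t : family X) A : is_topology t -> (forall x, A x) -> t A.
Proof. intros Ht H; apply (top_ext t (@setT X)); [apply top_setT; auto| split; auto; intros; exact I]. Qed.

Lemma noeth_anti {X} (t t' : family X) : fsubset t t' -> noetherian t' -> noetherian t.
Proof. intros Hs Hn S F HF HS; apply (Hn S F); auto. intros U HU; apply Hs, HF; auto. Qed.

Definition bad {X} (t : family X) (x : nat -> X) (U : nat -> set X) :=
  forall n, t (U n) /\ U n (x n) /\ forall k, n < k -> ~ U n (x k).

Lemma bad_sub {X} (t : family X) x U (h : nat -> nat) :
  bad t x U -> (forall i j, i < j -> h i < h j) -> bad t (fun i => x (h i)) (fun i => U (h i)).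
Proof.
  intros B Hh n; destruct (B (h n)) as [B1 [B2 B3]]; split; [|split]; auto.
Qed.

Lemma nobad_of_noeth {X} (t : family X) x U : noetherian t -> ~ bad t x U.
Proof.
  intros Hn B.
  destruct (Hn (fun z => exists n, z = x n) (fun V => exists n, V = U n)) as [l [Hl Hc]].
  - intros V [n ->]; apply B.
  - intros z [n ->]; exists (U n); split; [exists n; auto| apply B].
  - assert (Hb : exists N, forall V, In V l -> exists n, n < N /\ V = U n).
    { clear Hc; induction l as [|a l IH].
      - exists 0; intros V [].
      - destruct IH as [N HN]. { intros V HV; apply Hl; right; auto. }
        destruct (Hl a (or_introl eq_refl)) as [m ->].
        exists (S (max N m)); intros V [<-|HV].
        + exists m; split; auto; lia.
        + destruct (HN V HV) as [n [Hn' ->]]; exists n; split; auto; lia. }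
    destruct Hb as [N HN].
    destruct (Hc (x N) (ex_intro _ N eq_refl)) as [V [HV HVx]].
    destruct (HN V HV) as [n [Hlt ->]].
    destruct (B n) as [_ [_ B3]]; apply (B3 N Hlt HVx).
Qed.

Lemma noeth_of_nobad {X} (t : family X) : (forall x U, ~ bad t x U) -> noetherian t.
Proof.
  intros Hnb S; apply NNPP; intro Hnc.
  unfold compact_in in Hnc.
  apply not_all_ex_not in Hnc; destruct Hnc as [F Hnc].
  apply imply_to_and in Hnc; destruct Hnc as [HF Hnc].
  apply imply_to_and in Hnc; destruct Hnc as [HS Hnc].
  assert (Hne : exists x0 U0, S x0 /\ F U0 /\ U0 x0).
  { apply NNPP; intro Hno; apply Hnc; exists nil; split.
    - intros U [].
    - intros z Hz; exfalso; apply Hno; destruct (HS z Hz) as [U [HU HUz]]; eauto. }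
  destruct Hne as [x0 [U0 [Hx0 [HU0 HU0x]]]].
  assert (Hstep : forall l : list (set X), exists p : X * set X,
    (forall U, In U l -> F U) -> S (fst p) /\ (forall U, In U l -> ~ U (fst p)) /\ F (snd p) /\ snd p (fst p)).
  { intro l; destruct (classic (forall U, In U l -> F U)) as [Hl|Hl].
    - assert (Hx : exists z, S z /\ forall U, In U l -> ~ U z).
      { apply NNPP; intro Hno; apply Hnc; exists l; split; auto.
        intros z Hz; apply NNPP; intro Hz'; apply Hno; exists z; split; auto.
        intros U HU HUz; apply Hz'; eauto. }
      destruct Hx as [z [Hz Hzl]]; destruct (HS z Hz) as [U [HU HUz]].
      exists (z, U); intros _; simpl; auto.
    - exists (x0, U0); intro H; contradiction. }
  pose (nx := fun l => proj1_sig (constructive_indefinite_description _ (Hstep l))).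
  assert (Hnx : forall l, (forall U, In U l -> F U) -> S (fst (nx l)) /\ (forall U, In U l -> ~ U (fst (nx l))) /\ F (snd (nx l)) /\ snd (nx l) (fst (nx l))).
  { intro l; exact (proj2_sig (constructive_indefinite_description _ (Hstep l))). }
  clearbody nx.
  set (lst := fix lst (n : nat) : list (set X) := match n with 0 => nil | S k => snd (nx (lst k)) :: lst k end).
  assert (Hlst : forall n U, In U (lst n) -> F U).
  { induction n as [|n IH]; simpl; [intros U []|].
    intros U [<-|HU]; auto. apply (Hnx _ IH). }
  assert (Hin : forall n k, n < k -> In (snd (nx (lst n))) (lst k)).
  { intros n k; induction k as [|k IH]; intro Hk; [lia|].
    simpl. destruct (Nat.eq_dec n k) as [->|Hne]; [left; auto| right; apply IH; lia]. }
  apply (Hnb (fun n => fst (nx (lst n))) (fun n => snd (nx (lst n)))).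
  intro n; destruct (Hnx (lst n) (Hlst n)) as [_ [_ [H3 H4]]]; split; [apply HF; exact H3|split; [exact H4|]].
  intros k Hk; destruct (Hnx (lst k) (Hlst k)) as [_ [H2 _]]; apply H2, Hin; auto.
Qed.

Definition sup {X} (F : family X -> Prop) : family X :=
  generated (fun U => exists r, F r /\ r U).

Inductive tower {X} (R : family X -> family X) : family X -> Prop :=
| tw_sup : forall F, (forall r, F r -> tower R r) -> tower R (sup F)
| tw_R : forall r, tower R r -> tower R (R r).

Definition strict {X} (r s : family X) := fsubset r s /\ ~ fsubset s r.

Lemma sup_above {X} (F : family X -> Prop) r : F r -> fsubset r (sup F).
Proof. intros Hr U HU; apply gen_incl; eauto. Qed.

Lemma sup_below {X} (F : family X -> Prop) s : is_topology s -> (forall r, F r -> fsubset r s) -> fsubset (sup F) s.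
Proof. intros Hs H; apply gen_min; auto. intros U [r [Hr HU]]; eapply H; eauto. Qed.

Lemma sup_top {X} (F : family X -> Prop) : is_topology (sup F).
Proof. apply gen_top. Qed.

Lemma Rmono {X} (R : family X -> family X) : refinement R -> forall a b, is_topology a -> is_topology b ->
  fsubset a b -> fsubset (R a) (R b).
Proof. intros HR a b Ha Hb Hab; exact (proj1 (proj2 HR) a b Ha Hb Hab). Qed.

Lemma tower_top {X} (R : family X -> family X) : refinement R -> forall r, tower R r -> is_topology r.
Proof. intros HR r Hr; induction Hr; [apply sup_top| apply HR; auto]. Qed.

Lemma tower_post {X} (R : family X -> family X) : refinement R -> forall r, tower R r -> fsubset r (R r).
Proof.
  intros HR r Hr; induction Hr as [F HF IH| r Hr IH].
  - apply sup_below. { apply HR, sup_top. }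
    intros r Hr. intros U HU. apply IH in HU; auto.
    revert HU; apply (proj1 (proj2 HR)); [apply (tower_top R HR); auto | apply sup_top | apply sup_above; auto].
  - apply (proj1 (proj2 HR)); auto; [apply (tower_top R HR); auto| apply HR, (tower_top R HR); auto].
Qed.

Lemma tower_below {X} (R : family X -> family X) : refinement R -> forall m, is_topology m -> fsubset (R m) m ->
  forall r, tower R r -> fsubset r m.
Proof.
  intros HR m Hm HRm r Hr; induction Hr as [F HF IH| r Hr IH].
  - apply sup_below; auto.
  - intros U HU; apply HRm; revert HU; apply (proj1 (proj2 HR)); auto. apply (tower_top R HR); auto.
Qed.

Lemma fsub_trans {X} (a b c : family X) : fsubset a b -> fsubset b c -> fsubset a c.
Proof. unfold fsubset; auto. Qed.

Definition L1 {X} (R : family X -> family X) a := forall b, tower R b -> fsubset b a \/ fsubset (R a) b.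
Definition L2 {X} (R : family X -> family X) a := forall c, tower R c -> strict c a -> fsubset (R c) a.

Lemma L2_L1 {X} (R : family X -> family X) : refinement R -> forall a, tower R a -> L2 R a -> L1 R a.
Proof.
  intros HR a Ha H2 b Hb; induction Hb as [F HF IH| c Hc IH].
  - destruct (classic (exists d, F d /\ fsubset (R a) d)) as [[d [Hd Hs]]|Hno].
    + right; eapply fsub_trans; [exact Hs| apply sup_above; auto].
    + left; apply sup_below; [apply (tower_top R HR); auto|].
      intros d Hd; destruct (IH d Hd) as [H|H]; auto; exfalso; eauto.
  - destruct IH as [H|H].
    + destruct (classic (fsubset a c)) as [Hac|Hac].
      * right; apply Rmono; auto; apply (tower_top R HR); auto.
      * left; apply H2; auto; split; auto.
    + right; eapply fsub_trans; [exact H| apply tower_post; auto].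
Qed.

Lemma tower_L {X} (R : family X -> family X) : refinement R -> forall a, tower R a -> L2 R a /\ L1 R a.
Proof.
  intros HR a Ha.
  induction Ha as [F HF IH| e He IH].
  - assert (H2 : L2 R (sup F)).
    { intros c Hc [Hs Hns].
      assert (Hd : exists d, F d /\ ~ fsubset d c).
      { apply NNPP; intro Hno; apply Hns; apply sup_below; [apply (tower_top R HR); auto|].
        intros d Hd; apply NNPP; intro; apply Hno; eauto. }
      destruct Hd as [d [Hd Hdc]].
      destruct (IH d Hd) as [IH2 IH1].
      destruct (IH1 c Hc) as [Hcd|Hdc'].
      + apply (fsub_trans _ d); [apply IH2; [exact Hc| split; [exact Hcd| exact Hdc]] | apply sup_above; exact Hd].
      + exfalso; apply Hdc; apply (fsub_trans _ (R d)); [apply (tower_post R HR); apply HF; exact Hd| exact Hdc']. }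
    split; auto. apply L2_L1; auto. apply tw_sup; auto.
  - assert (H2 : L2 R (R e)).
    { intros c Hc [Hs Hns]. destruct IH as [IH2 IH1].
      destruct (IH1 c Hc) as [Hce|Hec].
      + apply Rmono; auto; apply (tower_top R HR); auto.
      + exfalso; apply Hns; exact Hec. }
    split; auto. apply L2_L1; auto. apply tw_R; auto.
Qed.

Lemma tower_chain {X} (R : family X -> family X) : refinement R -> forall a b, tower R a -> tower R b ->
  fsubset a b \/ fsubset b a.
Proof.
  intros HR a b Ha Hb; destruct (proj2 (tower_L R HR a Ha) b Hb) as [H|H]; auto.
  left; apply (fsub_trans _ (R a)); [apply (tower_post R HR); exact Ha| exact H].
Qed.

Definition least_of {X} (S : family X -> Prop) m := S m /\ forall s, S s -> fsubset m s.

Lemma tower_least {X} (R : family X -> family X) : refinement R -> forall S : family X -> Prop,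
  (exists s, S s) -> (forall s, S s -> tower R s) ->
  (forall s s', tower R s' -> S s -> fsubset s s' -> S s') ->
  exists m, tower R m /\ least_of S m.
Proof.
  intros HR S [s0 Hs0] HST Hup.
  set (m := sup (fun r => tower R r /\ forall s, S s -> fsubset r s)).
  assert (Hm : tower R m) by (apply tw_sup; intros r [Hr _]; auto).
  assert (Hlow : forall s, S s -> fsubset m s).
  { intros s Hs; apply sup_below; [apply (tower_top R HR); auto|]. intros r [_ Hr]; auto. }
  exists m; split; auto; split; auto.
  apply NNPP; intro HnS.
  assert (HRm : fsubset (R m) m).
  { apply sup_above; split; [apply tw_R; auto|].
    intros s Hs; destruct (proj2 (tower_L R HR m Hm) s (HST s Hs)) as [H|H]; auto.
    exfalso; apply HnS; eapply Hup; eauto. }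
  apply HnS; eapply Hup; [exact Hm| exact Hs0|].
  apply (tower_below R HR m); auto. apply (tower_top R HR); auto.
Qed.

Definition agree {X} n (x y : nat -> X) (U V : nat -> set X) := forall i, i < n -> y i = x i /\ V i = U i.

Definition Stg {X} (R : family X -> family X) (th : family X) n x U : family X -> Prop :=
  fun s => tower R s /\ exists y V, bad th y V /\ agree n x y U V /\ s (V n).

Lemma agree_trans {X} n (x y z : nat -> X) U V W : agree n x y U V -> agree n y z V W -> agree n x z U W.
Proof. intros H1 H2 i Hi; destruct (H1 i Hi); destruct (H2 i Hi); split; congruence. Qed.

Lemma agree_sym {X} n (x y : nat -> X) U V : agree n x y U V -> agree n y x V U.
Proof. intros H1 i Hi; destruct (H1 i Hi); split; congruence. Qed.

Lemma agree_weak {X} n m (x y : nat -> X) U V : m <= n -> agree n x y U V -> agree m x y U V.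
Proof. intros Hm H i Hi; apply H; lia. Qed.

Lemma Stg_agree {X} (R : family X -> family X) th n x U x' U' s :
  agree n x x' U U' -> Stg R th n x U s -> Stg R th n x' U' s.
Proof.
  intros Ha [Hs [y [V [B [Hy HV]]]]]; split; auto; exists y, V; split; [exact B| split; [|exact HV]].
  apply (agree_trans n x' x y U' U V); auto. apply agree_sym; auto.
Qed.

Lemma minimal_bad {X} (R : family X -> family X) (th : family X) x0 U0 :
  refinement R -> tower R th -> bad th x0 U0 ->
  exists x U (sg : nat -> family X), bad th x U /\
    forall n, least_of (Stg R th n x U) (sg n) /\ sg n (U n).
Proof.
  intros HR Hth B0.
  assert (Hstep : forall n (p : (nat -> X) * (nat -> set X)), exists p' : (nat -> X) * (nat -> set X),
     bad th (fst p) (snd p) -> bad th (fst p') (snd p') /\ agree n (fst p) (fst p') (snd p) (snd p') /\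
     exists m, least_of (Stg R th n (fst p) (snd p)) m /\ m (snd p' n)).
  { intros n p; destruct (classic (bad th (fst p) (snd p))) as [Bp|Bp]; [|exists p; tauto].
    destruct (tower_least R HR (Stg R th n (fst p) (snd p))) as [m [Hm [HmS Hmin]]].
    - exists th; split; auto; exists (fst p), (snd p); split; [exact Bp| split; [intros i Hi; auto| apply Bp]].
    - intros s [Hs _]; auto.
    - intros s s' Hs' [Hs [y [V [B [Ha HV]]]]] Hss; split; auto; exists y, V; split; [exact B| split; [exact Ha| apply Hss; exact HV]].
    - destruct HmS as [_ [y [V [B [Ha HV]]]]].
      exists (y, V); intros _; simpl; split; [exact B| split; [exact Ha|]].
      exists m; split; auto. split; auto. split; auto. exists y, V; auto. }
  pose (step := fun n p => proj1_sig (constructive_indefinite_description _ (Hstep n p))).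
  assert (Hst : forall n p, bad th (fst p) (snd p) -> bad th (fst (step n p)) (snd (step n p)) /\ agree n (fst p) (fst (step n p)) (snd p) (snd (step n p)) /\
     exists m, least_of (Stg R th n (fst p) (snd p)) m /\ m (snd (step n p) n)).
  { intros n p; exact (proj2_sig (constructive_indefinite_description _ (Hstep n p))). }
  clearbody step.
  set (it := fix it (k : nat) : (nat -> X) * (nat -> set X) := match k with 0 => (x0, U0) | S k => step k (it k) end).
  assert (Hbad : forall k, bad th (fst (it k)) (snd (it k))).
  { induction k; simpl; auto. apply Hst; auto. }
  assert (Hag : forall k k', k <= k' -> agree k (fst (it k)) (fst (it k')) (snd (it k)) (snd (it k'))).
  { intros k k' Hk; induction Hk.
    - intros i Hi; auto.
    - eapply agree_trans; [exact IHHk|]. apply (agree_weak m); auto. simpl. apply Hst; auto. }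
  set (x := fun i => fst (it (S i)) i). set (U := fun i => snd (it (S i)) i).
  assert (Hfin : forall k, agree k (fst (it k)) x (snd (it k)) U).
  { intros k i Hi; destruct (Hag (S i) k Hi i (Nat.lt_succ_diag_r i)) as [H1 H2]; unfold x, U; split; congruence. }
  assert (HB : bad th x U).
  { intro n; destruct (Hbad (S n) n) as [B1 [B2 B3]]; split; [exact B1| split; [exact B2|]].
    intros k Hk; destruct (Hfin (S k) n) as [_ HU]; [lia|].
    replace (U n) with (snd (it (S k)) n) by (unfold U in *; congruence).
    apply (Hbad (S k)); auto. }
  assert (Hex : forall n, exists m, least_of (Stg R th n x U) m /\ m (U n)).
  { intro n; destruct (Hst n (it n) (Hbad n)) as [_ [_ [m [[Hm1 Hm2] Hm3]]]].
    exists m; split; [split|].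
    - apply (Stg_agree R th n (fst (it n)) (snd (it n))); auto.
    - intros s Hs; apply Hm2. apply (Stg_agree R th n x U); auto. apply agree_sym; auto.
    - exact Hm3. }
  exists x, U, (fun n => proj1_sig (constructive_indefinite_description _ (Hex n))); split; auto.
  intro n; exact (proj2_sig (constructive_indefinite_description _ (Hex n))).
Qed.

Lemma sup_char {X} (F : family X -> Prop) U :
  (forall r, F r -> is_topology r) -> (forall a b, F a -> F b -> fsubset a b \/ fsubset b a) ->
  sup F U -> (forall x, U x) \/ forall z, U z -> exists r V, F r /\ r V /\ V z /\ subset V U.
Proof.
  intros Htop Hch HU.
  set (G := fun W : set X => (forall x, W x) \/ forall z, W z -> exists r V, F r /\ r V /\ V z /\ subset V W).
  assert (HG : is_topology G).
  { split; [|split].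
    - left; intro; exact I.
    - intros A B [HA|HA] [HB|HB].
      + left; intro z; split; auto.
      + right; intros z [_ Hz]; destruct (HB z Hz) as [r [V [Hr [HV [HVz HVB]]]]].
        exists r, V; repeat split; auto; intros w Hw; split; auto.
      + right; intros z [Hz _]; destruct (HA z Hz) as [r [V [Hr [HV [HVz HVB]]]]].
        exists r, V; repeat split; auto; intros w Hw; split; auto.
      + right; intros z [Hz Hz']; destruct (HA z Hz) as [r [V [Hr [HV [HVz HVB]]]]].
        destruct (HB z Hz') as [r' [V' [Hr' [HV' [HVz' HVB']]]]].
        destruct (Hch r r' Hr Hr') as [Hrr|Hrr].
        * exists r', (setI V V'); split; [exact Hr'| split; [apply top_inter; [apply Htop; auto| apply Hrr; auto| auto]| split; [split; auto| intros w [Hw Hw']; split; auto]]].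
        * exists r, (setI V V'); split; [exact Hr| split; [apply top_inter; [apply Htop; auto| auto| apply Hrr; auto]| split; [split; auto| intros w [Hw Hw']; split; auto]]].
    - intros Fm HFm. destruct (classic (exists A, Fm A /\ forall x, A x)) as [[A [HA Hfull]]|Hno].
      + left; intro z; exists A; auto.
      + right; intros z [A [HA Hz]]. destruct (HFm A HA) as [Hf|Hr]; [exfalso; eauto|].
        destruct (Hr z Hz) as [r [V [Hr' [HV [HVz HVA]]]]]; exists r, V; repeat split; auto.
        intros w Hw; exists A; auto. }
  assert (Hgen : fsubset (fun U0 => exists r, F r /\ r U0) G).
  { intros W [r [Hr HW]]; right; intros z Hz; exists r, W; split; [exact Hr| split; [exact HW| split; [exact Hz| intros w; auto]]]. }
  exact (gen_min _ G HG Hgen U HU).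
Qed.

Lemma restrict_char {X} (k : family X) H A : is_topology k -> restrict k H A ->
  (forall x, A x) \/ exists W, k W /\ forall x, A x <-> W x /\ H x.
Proof.
  intros Hk HA.
  set (G := fun A : set X => (forall x, A x) \/ exists W, k W /\ forall x, A x <-> W x /\ H x).
  assert (HG : is_topology G).
  { split; [|split].
    - left; intro; exact I.
    - intros A1 B1 [HA1|[W1 [HW1 E1]]] [HB1|[W2 [HW2 E2]]].
      + left; intro z; split; auto.
      + right; exists W2; split; auto; intro z; unfold setI; rewrite <- E2; split; [intros [_ h]; auto| intro h; split; auto].
      + right; exists W1; split; auto; intro z; unfold setI; rewrite <- E1; split; [intros [h _]; auto| intro h; split; auto].
      + right; exists (setI W1 W2); split; [apply top_inter; auto|].
        intro z; unfold setI; rewrite E1, E2; tauto.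
    - intros Fm HFm. destruct (classic (exists A, Fm A /\ forall x, A x)) as [[A1 [HA1 Hfull]]|Hno].
      + left; intro z; exists A1; auto.
      + right; exists (bigunion (fun W => k W /\ exists A1, Fm A1 /\ forall x, A1 x <-> W x /\ H x)).
        split; [apply top_union; auto; intros W [HW _]; auto|].
        intro z; split.
        * intros [A1 [HA1 Hz]]. destruct (HFm A1 HA1) as [Hf|[W [HW E]]]; [exfalso; eauto|].
          apply E in Hz; destruct Hz as [HWz Hz]; split; auto. exists W; split; auto. split; auto. exists A1; auto.
        * intros [[W [[HW [A1 [HA1 E]]] HWz]] Hz]; exists A1; split; auto; apply E; auto. }
  assert (Hgen : fsubset (fun W => exists U, k U /\ (forall x, W x <-> (U x /\ H x))) G).
  { intros W [U [HU E]]; right; exists U; auto. }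
  exact (gen_min _ G HG Hgen A HA).
Qed.

Lemma nat_min (P : nat -> Prop) n : P n -> exists p, P p /\ forall i, i < p -> ~ P i.
Proof.
  intro Hn. apply NNPP; intro Hno.
  assert (forall k, forall i, i <= k -> ~ P i).
  { induction k as [|k IH]; intros i Hi HP.
    - apply Hno; exists i; split; auto; intros; lia.
    - apply Hno; exists i; split; auto; intros j Hj; apply IH; lia. }
  eapply H; eauto.
Qed.

Lemma fun_min (f : nat -> nat) a : exists k, a <= k /\ forall k', a <= k' -> f k <= f k'.
Proof.
  destruct (nat_min (fun v => exists k, a <= k /\ f k = v) (f a)) as [v [[k [Hk Hv]] Hmin]].
  { exists a; auto. }
  exists k; split; auto; intros k' Hk'. destruct (Nat.lt_ge_cases (f k') (f k)) as [Hlt|]; auto.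
  exfalso; apply (Hmin (f k')); [lia| exists k'; auto].
Qed.

Definition expander_law {X} (R : family X -> family X) :=
  forall tau H, is_topology tau -> noetherian tau -> fsubset tau (R tau) ->
    is_closed tau H ->
    feq (restrict (R tau) H) (restrict (R (restrict tau H)) H).

Lemma core {X} (R : family X -> family X) (HR : refinement R) (HE : expander_law R)
  th (Hth : tower R th) (IH : forall p, tower R p -> strict p th -> noetherian p)
  x U sg (B : bad th x U) (Hsg : forall n, least_of (Stg R th n x U) (sg n) /\ sg n (U n)) : False.
Proof.
  assert (Httop : forall r, tower R r -> is_topology r) by (apply tower_top; auto).
  assert (F1 : forall n, tower R (sg n) /\ fsubset (sg n) th).
  { intro n; destruct (Hsg n) as [[[Ht _] Hmin] _]; split; auto.
    apply Hmin; split; auto; exists x, U; split; [exact B| split; [intros i Hi; auto| apply B]]. }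
  assert (F1t : forall n, tower R (sg n)) by (intro n; apply F1).
  assert (F1s : forall n, fsubset (sg n) th) by (intro n; apply F1).
  assert (F2 : forall n m, n <= m -> fsubset (sg n) (sg m)).
  { intros n m Hnm. destruct (Hsg n) as [[_ Hmin] _]. apply Hmin.
    split; [apply F1t|].
    set (h := fun i => if i <? n then i else i + (m - n)).
    exists (fun i => x (h i)), (fun i => U (h i)); split; [|split].
    - apply bad_sub; auto. intros i j Hij; unfold h.
      destruct (Nat.ltb_spec i n), (Nat.ltb_spec j n); lia.
    - intros i Hi; unfold h; destruct (Nat.ltb_spec i n); [split; auto| lia].
    - unfold h; destruct (Nat.ltb_spec n n); [lia|]. replace (n + (m - n)) with m by lia. apply Hsg. }
  set (pi := fun n => sup (fun r => tower R r /\ strict r (sg n))).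
  assert (Hpit : forall n, tower R (pi n)) by (intro n; apply tw_sup; intros r [Hr _]; auto).
  assert (Hpitop : forall n, is_topology (pi n)) by (intro n; apply Httop; auto).
  assert (Hpisub : forall n, fsubset (pi n) (sg n)).
  { intro n; apply sup_below; [apply Httop, F1t|]. intros r [_ [Hr _]]; auto. }
  assert (F3 : forall n, strict (pi n) (sg n)).
  { intro n; split; auto. intro Hsp.
    assert (HU : pi n (U n)) by (apply Hsp, Hsg).
    destruct (sup_char _ (U n) (fun r Hr => Httop r (proj1 Hr))
       (fun a b Ha Hb => tower_chain R HR a b (proj1 Ha) (proj1 Hb)) HU) as [Hf|Hc].
    - destruct (B n) as [_ [_ B3]]; apply (B3 (S n)); auto.
    - destruct (Hc (x n) (proj1 (proj2 (B n)))) as [r [V [[Hr [Hrs Hrns]] [HV [HVx HVU]]]]].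
      apply Hrns. destruct (Hsg n) as [[_ Hmin] _]. apply Hmin.
      split; auto. exists x, (fun i => if i =? n then V else U i). split; [|split].
      + intro i; destruct (Nat.eqb_spec i n) as [->|Hne].
        * split; [apply F1s with n; apply Hrs; exact HV| split; auto].
          intros k Hk HVk; apply HVU in HVk; destruct (B n) as [_ [_ B3]]; apply (B3 k); auto.
        * destruct (B i) as [B1 [B2 B3]]; split; auto; split; auto.
      + intros i Hi; destruct (Nat.eqb_spec i n); [lia| split; auto].
      + rewrite Nat.eqb_refl; auto. }
  assert (F4 : forall n, fsubset (sg n) (R (pi n))).
  { intro n. destruct (tower_chain R HR (sg n) (R (pi n)) (proj1 (F1 n)) (tw_R R _ (Hpit n))) as [H|H]; auto.
    apply NNPP; intro Hns. destruct (F3 n) as [_ Hn3]. apply Hn3.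
    assert (HRp : fsubset (R (pi n)) (pi n)).
    { apply sup_above; split; [apply tw_R; auto| split; auto]. }
    apply (tower_below R HR (pi n)); auto. }
  assert (F5 : forall n, noetherian (pi n)).
  { intro n; apply IH; auto. split.
    - eapply fsub_trans; [apply Hpisub| apply F1s].
    - intro Hth'. destruct (F3 n) as [_ Hn]; apply Hn. eapply fsub_trans; [apply F1s| exact Hth']. }
  assert (F6 : forall n m, n <= m -> fsubset (pi n) (pi m)).
  { intros n m Hnm; apply sup_above; split; auto. split.
    - eapply fsub_trans; [apply Hpisub| apply F2; auto].
    - intro Hc. destruct (F3 n) as [_ Hn]; apply Hn. eapply fsub_trans; [apply F2; eauto| exact Hc]. }
  assert (F7 : forall i n, i <= n -> sg i <> sg n -> fsubset (sg i) (pi n)).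
  { intros i n Hin Hne; apply sup_above; split; [apply F1t|]. split; [apply F2; auto|].
    intro Hc; apply Hne; apply fam_ext; auto; apply F2; auto. }
  set (Tn := fun n z => forall i, i < n -> sg i <> sg n -> ~ U i z).
  assert (F8 : forall n, is_closed (pi n) (Tn n)).
  { intro n; unfold is_closed.
    apply (top_ext _ (bigunion (fun V => exists i, i < n /\ sg i <> sg n /\ V = U i))).
    - apply top_union; auto. intros V [i [Hi [Hne ->]]]. apply (F7 i n); [lia| exact Hne| apply Hsg].
    - intro z; split.
      + intros [V [[i [Hi [Hne ->]]] HVz]] HT. apply (HT i Hi Hne HVz).
      + intro HnT; apply NNPP; intro Hno; apply HnT; intros i Hi Hne HUz; apply Hno.
        exists (U i); split; auto; exists i; auto. }
  assert (F9 : forall n m z, n <= m -> Tn m z -> Tn n z).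
  { intros n m z Hnm HT i Hi Hne; apply HT; [lia|]. intro Heq; apply Hne.
    apply fam_ext; [apply F2; lia|]. rewrite Heq; apply F2; auto. }
  assert (F10 : forall n k, n <= k -> Tn n (x k)).
  { intros n k Hnk i Hi _; destruct (B i) as [_ [_ B3]]; apply B3; lia. }
  set (rho := generated (fun Bs => exists n V, pi n V /\ forall z, Bs z <-> V z /\ Tn n z)).
  assert (Hrho : is_topology rho) by apply gen_top.
  assert (F11c : forall W, rho W -> (forall z, W z) \/
     forall z, W z -> exists n V, pi n V /\ V z /\ Tn n z /\ forall w, V w -> Tn n w -> W w).
  { set (G := fun W : set X => (forall z, W z) \/
     forall z, W z -> exists n V, pi n V /\ V z /\ Tn n z /\ forall w, V w -> Tn n w -> W w).
    assert (HG : is_topology G).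
    { split; [|split].
      - left; intro; exact I.
      - intros A1 B1 [HA|HA] [HB|HB].
        + left; intro z; split; auto.
        + right; intros z [_ Hz]; destruct (HB z Hz) as [n [V [H1 [H2 [H3 H4]]]]].
          exists n, V; split; [|split; [|split]]; auto. intros w Hw Hw'; split; auto.
        + right; intros z [Hz _]; destruct (HA z Hz) as [n [V [H1 [H2 [H3 H4]]]]].
          exists n, V; split; [|split; [|split]]; auto. intros w Hw Hw'; split; auto.
        + right; intros z [Hz Hz']; destruct (HA z Hz) as [n [V [H1 [H2 [H3 H4]]]]].
          destruct (HB z Hz') as [n' [V' [H1' [H2' [H3' H4']]]]].
          exists (max n n'), (setI V V'); split; [|split; [|split]].
          * apply top_inter; auto; [apply (F6 n)| apply (F6 n')]; auto; lia.
          * split; auto.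
          * destruct (Nat.max_spec n n') as [[_ ->]|[_ ->]]; auto.
          * intros w [Hw Hw'] HT; split; [apply H4| apply H4']; auto; (eapply F9; [|exact HT]; lia).
      - intros Fm HFm. destruct (classic (exists A, Fm A /\ forall x, A x)) as [[A1 [HA1 Hfull]]|Hno].
        + left; intro z; exists A1; auto.
        + right; intros z [A1 [HA1 Hz]]. destruct (HFm A1 HA1) as [Hf|Hr]; [exfalso; eauto|].
          destruct (Hr z Hz) as [n [V [H1 [H2 [H3 H4]]]]]; exists n, V; split; [|split; [|split]]; auto.
          intros w Hw Hw'; exists A1; auto. }
    intros W HW. refine (gen_min _ G HG _ W HW).
    intros Bs [n [V [HV E]]]; right; intros z Hz; apply E in Hz; destruct Hz as [Hz1 Hz2].
    exists n, V; split; [|split; [|split]]; auto. intros w Hw Hw'; apply E; auto. }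
  assert (F11 : noetherian rho).
  { apply noeth_of_nobad; intros y Z BZ.
    assert (Hex : forall k, exists p : nat * set X, pi (fst p) (snd p) /\ snd p (y k) /\ Tn (fst p) (y k) /\
                forall w, snd p w -> Tn (fst p) w -> Z k w).
    { intro k; destruct (BZ k) as [Z1 [Z2 Z3]]. destruct (F11c (Z k) Z1) as [Hf|Hc].
      - exfalso; apply (Z3 (S k)); auto.
      - destruct (Hc (y k) Z2) as [n [V HV]]; exists (n, V); exact HV. }
    set (lev := fun k => fst (proj1_sig (constructive_indefinite_description _ (Hex k)))).
    set (Vk := fun k => snd (proj1_sig (constructive_indefinite_description _ (Hex k)))).
    assert (HVk : forall k, pi (lev k) (Vk k) /\ Vk k (y k) /\ Tn (lev k) (y k) /\
                forall w, Vk k w -> Tn (lev k) w -> Z k w).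
    { intro k; exact (proj2_sig (constructive_indefinite_description _ (Hex k))). }
    clearbody lev Vk.
    set (am := fun a => proj1_sig (constructive_indefinite_description _ (fun_min lev a))).
    assert (Ham : forall a, a <= am a /\ forall k', a <= k' -> lev (am a) <= lev k').
    { intro a; exact (proj2_sig (constructive_indefinite_description _ (fun_min lev a))). }
    clearbody am.
    set (idx := fix idx (j : nat) : nat := match j with 0 => am 0 | S j => am (S (idx j)) end).
    assert (Hidx1 : forall j, idx j < idx (S j)) by (intro j; simpl; destruct (Ham (S (idx j))); lia).
    assert (Hidx : forall i j, i < j -> idx i < idx j).
    { intros i j Hij; induction Hij; [apply Hidx1| specialize (Hidx1 m); lia]. }
    assert (Hmin_j : forall j k', idx j <= k' -> lev (idx j) <= lev k').
    { intros [|j] k' Hk; simpl in *; apply Ham; [lia|].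
      destruct (Ham (S (idx j))) as [Ha _]. simpl in Hk. lia. }
    assert (Hlevmono : forall j j', j <= j' -> lev (idx j) <= lev (idx j')).
    { intros j j' Hj; apply Hmin_j. destruct (Nat.eq_dec j j') as [->|Hne]; [lia|]. apply Nat.lt_le_incl, Hidx; lia. }
    assert (Hglob : forall k, lev (idx 0) <= lev k) by (intro k; simpl; apply Ham; lia).
    set (m := lev (idx 0)).
    destruct (nat_min (fun i => sg i = sg m) m eq_refl) as [p [Hp Hpmin]].
    assert (Hpm : p <= m).
    { destruct (Nat.le_gt_cases p m); auto. exfalso; apply (Hpmin m); auto. }
    assert (Hpip : pi p = pi m) by (unfold pi; rewrite Hp; reflexivity).
    set (y' := fun i => if i <? p then x i else y (idx (i - p))).
    set (V' := fun i => if i <? p then U i else Vk (idx (i - p))).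
    assert (B' : bad th y' V').
    { intro i; unfold y', V'. destruct (Nat.ltb_spec i p) as [Hip|Hip].
      - destruct (B i) as [B1 [B2 B3]]; split; auto; split; auto.
        intros k Hk; destruct (Nat.ltb_spec k p) as [Hkp|Hkp]; auto.
        destruct (HVk (idx (k - p))) as [_ [_ [HT _]]].
        assert (HTm : Tn m (y (idx (k - p)))) by (eapply F9; [apply Hglob| exact HT]).
        apply HTm; [lia|]. intro Heq; apply (Hpmin i Hip); auto.
      - destruct (HVk (idx (i - p))) as [H1 [H2 [H3 H4]]]. split; [|split; auto].
        + apply (F1s (lev (idx (i - p)))); apply Hpisub; exact H1.
        + intros k Hk; destruct (Nat.ltb_spec k p) as [Hkp|Hkp]; [lia|].
          intro HV. destruct (HVk (idx (k - p))) as [_ [_ [HT' _]]].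
          assert (Hlt : idx (i - p) < idx (k - p)) by (apply Hidx; lia).
          destruct (BZ (idx (i - p))) as [_ [_ BZ3]]. apply (BZ3 _ Hlt). apply H4; auto.
          eapply F9; [apply Hlevmono| exact HT']. lia. }
    destruct (F3 p) as [_ Hn3]; apply Hn3. destruct (Hsg p) as [[_ Hmin] _]. apply Hmin.
    split; [apply Hpit|]. exists y', V'; split; [exact B'| split].
    - intros i Hi; unfold y', V'; destruct (Nat.ltb_spec i p); [split; auto| lia].
    - unfold V'; destruct (Nat.ltb_spec p p); [lia|]. rewrite Nat.sub_diag. rewrite Hpip.
      destruct (HVk (idx 0)) as [H1 _]; exact H1. }
  assert (F12 : forall n, exists W, R rho W /\ forall z, Tn n z -> (W z <-> U n z)).
  { intro n. destruct (HE (pi n) (Tn n) (Hpitop n) (F5 n) (tower_post R HR _ (Hpit n)) (F8 n)) as [Hf1 _].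
    assert (HA : restrict (R (pi n)) (Tn n) (fun z => U n z /\ Tn n z)).
    { apply gen_incl; exists (U n); split; [apply F4, Hsg| intro; tauto]. }
    apply Hf1 in HA.
    assert (Hk : is_topology (R (restrict (pi n) (Tn n)))) by (apply HR, gen_top).
    destruct (restrict_char _ _ _ Hk HA) as [Hfull|[W [HW E]]].
    - destruct (Hfull (x (S n))) as [HU _]. exfalso. destruct (B n) as [_ [_ B3]]; apply (B3 (S n)); auto.
    - exists W; split.
      + revert HW; apply Rmono; auto; [apply gen_top|].
        apply gen_min; auto. intros Bs [U' [HU' E']]. apply gen_incl. exists n, U'; split; auto.
      + intros z Hz; split; intro H; [apply (proj2 (E z)); auto| apply (proj1 (E z)); auto]. }
  set (W := fun n => proj1_sig (constructive_indefinite_description _ (F12 n))).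
  assert (HW : forall n, R rho (W n) /\ forall z, Tn n z -> (W n z <-> U n z)).
  { intro n; exact (proj2_sig (constructive_indefinite_description _ (F12 n))). }
  clearbody W.
  apply (nobad_of_noeth (R rho) x W (proj2 (proj2 HR) rho Hrho F11)).
  intro n; destruct (HW n) as [HW1 HW2]; split; auto; split.
  - apply HW2; [apply F10; auto| apply B].
  - intros k Hk Hc; apply HW2 in Hc; [|apply F10; lia]. destruct (B n) as [_ [_ B3]]; apply (B3 k); auto.
Qed.

Lemma tower_noeth {X} (R : family X -> family X) : refinement R -> expander_law R ->
  forall th, tower R th -> noetherian th.
Proof.
  intros HR HE th0 Hth0. apply NNPP; intro Hn0.
  destruct (tower_least R HR (fun s => tower R s /\ ~ noetherian s)) as [th [Hth [[_ Hnth] Hmin]]].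
  - exists th0; auto.
  - intros s [Hs _]; auto.
  - intros s s' Hs' [Hs Hns] Hss; split; auto. intro Hn; apply Hns; eapply noeth_anti; eauto.
  - assert (IH : forall p, tower R p -> strict p th -> noetherian p).
    { intros p Hp [Hps Hpns]; apply NNPP; intro Hnp; apply Hpns; apply Hmin; auto. }
    assert (Hb : exists x U, bad th x U).
    { apply NNPP; intro Hno; apply Hnth; apply noeth_of_nobad; intros x U HB; apply Hno; eauto. }
    destruct Hb as [x0 [U0 B0]].
    destruct (minimal_bad R th x0 U0 HR Hth B0) as [x [U [sg [B Hsg]]]].
    exact (core R HR HE th Hth IH x U sg B Hsg).
Qed.

Theorem mainTheorem1 (X : Type) (R : family X -> family X) :
  topology_expander R ->
  (exists tau : family X, is_lfp R tau) /\
  (forall tau : family X, is_lfp R tau -> noetherian tau).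
Proof.
  intros [HR HE].
  set (top := sup (tower R)).
  assert (Htw : tower R top) by (apply tw_sup; auto).
  assert (Htop : is_topology top) by apply sup_top.
  assert (Hfix : feq (R top) top).
  { split; [apply sup_above; apply tw_R; auto| apply tower_post; auto]. }
  assert (Hleast : forall sigma, is_topology sigma -> feq (R sigma) sigma -> fsubset top sigma).
  { intros sigma Hs [Hs1 _]; apply (tower_below R HR sigma); auto. }
  split.
  - exists top; split; [|split]; auto.
  - intros tau [Ht [_ Hl]]. apply (noeth_anti tau top); [apply Hl; auto|].
    apply (tower_noeth R HR HE); auto.
Qed.
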